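(* Let $u,w$ be words over $\{L,R\}$. If $w$ starts with $L$ and $u$ is a tail of $w$, then $Lu$ is reduced from $Lw$. Dually, if $w$ starts with $R$ and $u$ is a tail of $w$, then $Ru$ is reduced from $Rw$.
   Context: Words are finite strings (including the empty word) over $\{L,R\}$. A tail of $w$ is any word $v'$ with $w=vv'$ for some word $v$. A word $u$ is reduced from $w$ if it is obtained from $w$ by finitely many (possibly zero) successive applications of the reduction rules, where $v,v'$ are arbitrary words: (1) $vRRv'\Rightarrow vRv'$; (1') $vLLv'\Rightarrow vLv'$; (2) $vLRv'\Rightarrow vv'$; (2') $vRLv'\Rightarrow vv'$. *)

(* Defs.v *)
From Stdlib Require Import List Relations.
Import ListNotations.

Inductive letter : Type := L | R.

Definition word := list letter.

Inductive step : word -> word -> Prop :=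
| step_RR : forall v v' : word, step (v ++ [R; R] ++ v') (v ++ [R] ++ v')
| step_LL : forall v v' : word, step (v ++ [L; L] ++ v') (v ++ [L] ++ v')
| step_LR : forall v v' : word, step (v ++ [L; R] ++ v') (v ++ v')
| step_RL : forall v v' : word, step (v ++ [R; L] ++ v') (v ++ v').

Definition reduced_from (u w : word) : Prop := clos_refl_trans word step w u.

Definition is_tail (u w : word) : Prop := exists v : word, w = v ++ u.

(* Main.v *)
Require Import Defs.
From Stdlib Require Import List Relations.
Import ListNotations.

Lemma step_ctx p s x y : step x y -> step (p ++ x ++ s) (p ++ y ++ s).
Proof.
  intros H; destruct H; rewrite !app_assoc, <- !(app_assoc (p ++ v));
  constructor.
Qed.

Lemma red_ctx p s x y : reduced_from y x -> reduced_from (p ++ y ++ s) (p ++ x ++ s).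
Proof.
  unfold reduced_from; intros H; induction H.
  - apply rt_step, step_ctx; auto.
  - apply rt_refl.
  - eapply rt_trans; eauto.
Qed.

Lemma red_step x y : step x y -> reduced_from y x.
Proof. intros; apply rt_step; auto. Qed.

Lemma red_trans x y z : reduced_from y x -> reduced_from z y -> reduced_from z x.
Proof. intros; eapply rt_trans; eauto. Qed.

Lemma norm v : exists y, (y = [] \/ y = [L] \/ y = [R]) /\ reduced_from y v.
Proof.
  induction v as [|a v IH] using rev_ind.
  - exists []; split; auto; apply rt_refl.
  - destruct IH as [y [Hy Hr]].
    assert (H1 : reduced_from (y ++ [a]) (v ++ [a]))
      by (apply (red_ctx [] [a]) in Hr; simpl in Hr; exact Hr).
    destruct Hy as [ -> | [ -> | -> ] ]; destruct a.
    + exists [L]; auto.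
    + exists [R]; auto.
    + exists [L]; split; auto. eapply red_trans; [exact H1|].
      apply red_step. exact (step_LL [] []).
    + exists []; split; auto. eapply red_trans; [exact H1|].
      apply red_step. exact (step_LR [] []).
    + exists []; split; auto. eapply red_trans; [exact H1|].
      apply red_step. exact (step_RL [] []).
    + exists [R]; split; auto. eapply red_trans; [exact H1|].
      apply red_step. exact (step_RR [] []).
Qed.

Lemma LL v : reduced_from [L] (L :: L :: v).
Proof.
  destruct (norm v) as [y [Hy Hr]].
  apply (red_ctx [L; L] []) in Hr. rewrite !app_nil_r in Hr. simpl in Hr.
  eapply red_trans; [exact Hr|].
  destruct Hy as [ -> | [ -> | -> ] ].
  - apply red_step. exact (step_LL [] []).
  - eapply red_trans; apply red_step; [exact (step_LL [] [L])|exact (step_LL [] [])].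
  - apply red_step. exact (step_LR [L] []).
Qed.

Lemma RR v : reduced_from [R] (R :: R :: v).
Proof.
  destruct (norm v) as [y [Hy Hr]].
  apply (red_ctx [R; R] []) in Hr. rewrite !app_nil_r in Hr. simpl in Hr.
  eapply red_trans; [exact Hr|].
  destruct Hy as [ -> | [ -> | -> ] ].
  - apply red_step. exact (step_RR [] []).
  - apply red_step. exact (step_RL [R] []).
  - eapply red_trans; apply red_step; [exact (step_RR [] [R])|exact (step_RR [] [])].
Qed.

Theorem mainTheorem6 :
  (forall u w : word,
      (exists w0, w = L :: w0) -> is_tail u w ->
      reduced_from (L :: u) (L :: w)) /\
  (forall u w : word,
      (exists w0, w = R :: w0) -> is_tail u w ->
      reduced_from (R :: u) (R :: w)).
Proof.
  split; intros u w [w0 ->] [p Hp]; destruct p as [|a p].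
  - simpl in Hp; subst; apply rt_refl.
  - injection Hp as Ha Hw; subst. pose proof (red_ctx [] u _ _ (LL p)) as H.
    simpl in H. exact H.
  - simpl in Hp; subst; apply rt_refl.
  - injection Hp as Ha Hw; subst. pose proof (red_ctx [] u _ _ (RR p)) as H.
    simpl in H. exact H.
Qed.
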